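(* For any constant $\alpha>0$, there exists $c>0$ (depending on $\alpha$) such that there is no $(1, o(1/n))$-differentially private (central model) $(\alpha, cm^2)$-approximation algorithm for the rank aggregation problem when $n=o(\sqrt m)$.
   Context: Items are $[m]=\{1,\dots,m\}$; $\mathbb{S}_m$ is the set of rankings (permutations) of $[m]$, $\pi(j)$ being the position of item $j$. The Kendall tau distance is $K(\pi_1,\pi_2)=|\{(i,j):\pi_1(i)<\pi_1(j),\ \pi_2(i)>\pi_2(j)\}|$. An input is a list $\Pi=\{\pi_1,\dots,\pi_n\}$ of $n$ rankings. Define $\bar K(\sigma,\Pi)=\frac1n\sum_k K(\sigma,\pi_k)$ and $\mathrm{OPT}(\Pi)=\min_\sigma\bar K(\sigma,\Pi)$. A randomized algorithm is an $(\alpha,\beta)$-approximation algorithm if for every input $\Pi$ its output $\sigma$ satisfies $\mathbb{E}[\bar K(\sigma,\Pi)]\le\alpha\,\mathrm{OPT}(\Pi)+\beta$. Two inputs are neighboring if they differ in a single ranking; an algorithm $\mathcal{M}$ is $(\epsilon,\delta)$-DP (central model) if for all neighboring $\Pi,\Pi'$ and all output sets $S$, $\Pr[\mathcal{M}(\Pi)\in S]\le e^{\epsilon}\Pr[\mathcal{M}(\Pi')\in S]+\delta$. *)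

(* Defs.v *)
From HB Require Import structures.
From mathcomp Require Import all_boot all_order all_fingroup all_algebra.
From mathcomp Require Import reals sequences exp.
Set Implicit Arguments. Unset Strict Implicit. Unset Printing Implicit Defensive.
Import Order.TTheory GRing.Theory Num.Theory.
Local Open Scope ring_scope.

(* A ranking of the m items 'I_m is a permutation pi : 'S_m; pi j is the
   position of item j.  An input is a list of n rankings. *)
Definition input (n m : nat) := {ffun 'I_n -> 'S_m}.

Definition kendall (m : nat) (p1 p2 : 'S_m) : nat :=
  #|[set ij : 'I_m * 'I_m | (p1 ij.1 < p1 ij.2)%N && (p2 ij.1 > p2 ij.2)%N]|.

Definition sumK (n m : nat) (P : input n m) (s : 'S_m) : nat :=
  (\sum_(k < n) kendall s (P k))%N.

Definition Kbar (R : realType) (n m : nat) (s : 'S_m) (P : input n m) : R :=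
  (sumK P s)%:R / n%:R.

Definition OPT (R : realType) (n m : nat) (P : input n m) : R :=
  (sumK P [arg min_(s < (1%g : 'S_m)) sumK P s])%:R / n%:R.

(* A randomized algorithm: maps each input to a probability distribution
   on the output rankings. *)
Definition mechanism (R : realType) (n m : nat) := input n m -> {ffun 'S_m -> R}.

Definition is_randomized_alg (R : realType) (n m : nat) (M : mechanism R n m) :=
  forall P : input n m, (forall s, 0 <= M P s) /\ \sum_s M P s = 1.

Definition neighboring (n m : nat) (P P' : input n m) :=
  exists i : 'I_n, forall j : 'I_n, j != i -> P j = P' j.

Definition is_DP (R : realType) (n m : nat) (eps delta : R) (M : mechanism R n m) :=
  forall P P' : input n m, neighboring P P' ->
  forall S : {set 'S_m},
    \sum_(s in S) M P s <= expR eps * \sum_(s in S) M P' s + delta.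

Definition is_approx (R : realType) (n m : nat) (alpha beta : R) (M : mechanism R n m) :=
  forall P : input n m, \sum_s M P s * Kbar R s P <= alpha * OPT R P + beta.

(* Main.v *)
From HB Require Import structures.
Require Import Defs.
From mathcomp Require Import all_boot all_order all_fingroup all_algebra.
From mathcomp Require Import reals sequences exp.
From mathcomp Require Import ring lra zify.
Import Order.TTheory GRing.Theory Num.Theory.
Local Open Scope ring_scope.
Section Bern.
Variable R : realType.
Variable I : finType.

Definition bern (p : R) (b : bool) : R := if b then p else 1 - p.
Definition pw (p : I -> R) (b : {ffun I -> bool}) : R := \prod_k bern (p k) (b k).

Lemma prod_sum (F : I -> bool -> R) :
  \sum_(b : {ffun I -> bool}) \prod_k F k (b k) = \prod_k (F k true + F k false).
Proof.
rewrite -bigA_distr_bigA; apply: eq_bigr => k _; by rewrite big_bool.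
Qed.

Lemma pw_gen (p : I -> R) (G : I -> bool -> R) :
  \sum_b pw p b * \prod_k G k (b k) = \prod_k (p k * G k true + (1 - p k) * G k false).
Proof.
transitivity (\prod_k (bern (p k) true * G k true + bern (p k) false * G k false)); last by [].
rewrite -(prod_sum (fun k t => bern (p k) t * G k t)); apply: eq_bigr => b _; by rewrite /pw -big_split.
Qed.

Lemma pw_sum1 p : \sum_b pw p b = 1.
Proof.
have := pw_gen p (fun _ _ => 1); rewrite /=.
rewrite (eq_bigr (fun b => pw p b)); last by move=> b _; rewrite big1_eq mulr1.
move=> ->; apply: big1 => k _; by rewrite !mulr1 addrC subrK.
Qed.

Lemma pw_ge0 p : (forall k, 0 <= p k <= 1) -> forall b, 0 <= pw p b.
Proof.
move=> hp b; apply: prodr_ge0 => k _; rewrite /bern; case: (b k);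
 have /andP[h1 h2] := hp k; by rewrite ?subr_ge0.
Qed.

Lemma pw_marg p j (g : bool -> R) :
  \sum_b pw p b * g (b j) = p j * g true + (1 - p j) * g false.
Proof.
have := pw_gen p (fun k t => if k == j then g t else 1).
have -> : \sum_b pw p b * \prod_k (if k == j then g (b k) else 1) =
          \sum_b pw p b * g (b j).
  apply: eq_bigr => b _; congr (_ * _).
  rewrite (bigD1 j) //= eqxx big1 ?mulr1 // => k /negPf ->; done.
move=> ->; rewrite (bigD1 j) //= eqxx big1 ?mulr1 // => k /negPf ->.
by rewrite !mulr1 addrC subrK.
Qed.

Lemma pw_marg2 p j l (g h : bool -> R) : j != l ->
  \sum_b pw p b * (g (b j) * h (b l)) =
  (p j * g true + (1 - p j) * g false) * (p l * h true + (1 - p l) * h false).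
Proof.
move=> jl.
have := pw_gen p (fun k t => if k == j then g t else if k == l then h t else 1).
have -> : \sum_b pw p b * \prod_k (if k == j then g (b k) else if k == l then h (b k) else 1) =
          \sum_b pw p b * (g (b j) * h (b l)).
  apply: eq_bigr => b _; congr (_ * _).
  rewrite (bigD1 j) //= eqxx (bigD1 l) /=; last by rewrite eq_sym.
  rewrite eq_sym (negPf jl) eqxx big1 ?mulr1 // => k /andP[/negPf -> /negPf ->]; done.
move=> ->; rewrite (bigD1 j) //= eqxx (bigD1 l) /=; last by rewrite eq_sym.
rewrite eq_sym (negPf jl) eqxx big1 ?mulr1 //.
by move=> k /andP[/negPf -> /negPf ->]; rewrite !mulr1 addrC subrK.
Qed.

Definition bv (t : bool) : R := (t : nat)%:R.

Lemma pw_center p j : \sum_b pw p b * (bv (b j) - p j) = 0.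
Proof. rewrite (pw_marg p j (fun t => bv t - p j)) /bv /=; ring. Qed.

Lemma pw_var p (w : I -> R) :
  \sum_b pw p b * (\sum_j w j * (bv (b j) - p j)) ^+ 2 =
  \sum_j w j ^+ 2 * (p j * (1 - p j)).
Proof.
set u := fun j (b : {ffun I -> bool}) => w j * (bv (b j) - p j).
have E (b : {ffun I -> bool}) : (\sum_j w j * (bv (b j) - p j)) ^+ 2 = \sum_j \sum_l u j b * u l b.
  by rewrite expr2 big_distrl; apply: eq_bigr => j _; rewrite big_distrr.
transitivity (\sum_j \sum_l \sum_b pw p b * (u j b * u l b)).
  under eq_bigr => b _ do rewrite E big_distrr /=.
  rewrite exchange_big; apply: eq_bigr => j _.
  under eq_bigr => b _ do rewrite big_distrr /=.
  by rewrite exchange_big.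
apply: eq_bigr => j _.
rewrite (bigD1 j) //= [X in _ + X]big1 ?addr0; last first.
  move=> l lj; rewrite /u /=.
  have jl : j != l by rewrite eq_sym.
  have := @pw_marg2 p j l (fun t => w j * (bv t - p j)) (fun t => w l * (bv t - p l)) jl.
  move=> ->; rewrite /bv /=; ring.
rewrite /u /=.
have := pw_marg p j (fun t => w j * (bv t - p j) * (w j * (bv t - p j))).
move=> ->; rewrite /bv /=; ring.
Qed.
End Bern.
Arguments bern {R}. Arguments pw {R I}. Arguments prod_sum {R I}. Arguments pw_gen {R I}.
Arguments pw_sum1 {R I}. Arguments pw_ge0 {R I}. Arguments pw_marg {R I}. Arguments pw_marg2 {R I}.
Arguments bv {R}. Arguments pw_center {R I}. Arguments pw_var {R I}.
Section KeyPerm.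
Variable m : nat.
Local Open Scope nat_scope.
Variable key : 'I_m -> nat.
Hypothesis key_inj : injective key.

Definition kcnt (i : 'I_m) := #|[set i' | key i' < key i]|.

Lemma kcnt_lt i : kcnt i < m.
Proof.
rewrite -[m]card_ord -cardsT /kcnt; apply: proper_card; rewrite properT.
apply/negP => /eqP E; have : i \in [set i' | key i' < key i] by rewrite E inE.
by rewrite inE ltnn.
Qed.

Lemma kcnt_mono i j : key i < key j -> kcnt i < kcnt j.
Proof.
move=> h; apply: proper_card; apply/properP; split.
  apply/subsetP => k; rewrite !inE => hk; exact: ltn_trans hk h.
by exists i; rewrite !inE ?h // ltnn.
Qed.

Lemma kcnt_le i j : key i <= key j -> kcnt i <= kcnt j.
Proof.
move=> h; apply: subset_leq_card; apply/subsetP => k; rewrite !inE => hk.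
exact: leq_trans hk h.
Qed.

Definition kfun i : 'I_m := Ordinal (kcnt_lt i).

Lemma kfun_inj : injective kfun.
Proof.
move=> i j /(congr1 val) /= E; apply: key_inj; apply/eqP; rewrite eqn_leq.
case: (ltngtP (key i) (key j)) => // h.
  by have := kcnt_mono _ _ h; rewrite E ltnn.
by have := kcnt_mono _ _ h; rewrite E ltnn.
Qed.

Definition kperm : 'S_m := perm kfun_inj.

Lemma kperm_lt i j : (kperm i < kperm j) = (key i < key j).
Proof.
rewrite !permE /=; case: (ltnP (key i) (key j)) => h.
  exact: kcnt_mono.
by apply/negbTE; rewrite -leqNgt; apply: kcnt_le.
Qed.
End KeyPerm.

Section Rank.
Variables (m d : nat).
Local Open Scope nat_scope.

Definition rkey (x : {ffun 'I_m -> bool}) (i : 'I_m) : nat :=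
  if i < d then (if x i then nat_of_ord i else 2 * m + i) else m + i.

Lemma rkey_inj x : injective (rkey x).
Proof.
move=> i j; rewrite /rkey; have := ltn_ord i; have := ltn_ord j => hi hj.
move=> E; apply: ord_inj; move: E.
by case: (ltnP i d) => ? ; case: (ltnP j d) => ?; case: (x i); case: (x j) => /=; lia.
Qed.

Definition rk x : 'S_m := @kperm m (rkey x) (@rkey_inj x).

Lemma rk_lt x i j : (rk x i < rk x j) = (rkey x i < rkey x j).
Proof. exact: (@kperm_lt m (rkey x) (@rkey_inj x)). Qed.

Lemma kendall_sum (p1 p2 : 'S_m) :
  kendall p1 p2 = (\sum_u \sum_v ((p1 u < p1 v) && (p2 v < p2 u)))%N.
Proof.
rewrite /kendall -sum1_card big_mkcond /= pair_big /=.
by apply: eq_bigr => [[u v]] _; rewrite inE /=; case: ifP.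
Qed.

Definition Dset (x y : {ffun 'I_m -> bool}) (j : 'I_m) : bool := (j < d) && (x j != y j).

Lemma kendall_ub x y :
  (kendall (rk y) (rk x) <= 2 * m * \sum_j (Dset x y j : nat))%N.
Proof.
rewrite kendall_sum.
apply: (@leq_trans (\sum_u \sum_v ((Dset x y u : nat) + (Dset x y v : nat)))%N).
  apply: leq_sum => u _; apply: leq_sum => v _.
  rewrite !rk_lt /Dset /rkey.
  case: (ltnP u d) => hu; case: (ltnP v d) => hv /=;
  case: (x u) (y u) (x v) (y v) => [] [] [] [] //=; lia.
rewrite (eq_bigr (fun u => (m * Dset x y u + \sum_v (Dset x y v : nat))%N)); last first.
  move=> u _; rewrite big_split /= sum_nat_const card_ord; lia.
rewrite big_split /= sum_nat_const card_ord -big_distrr /=; lia.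
Qed.

Definition Bc (s : 'S_m) (j : 'I_m) : nat := #|[set f : 'I_m | (d <= f) && (s j < s f)]|.

Lemma count_ge : (\sum_(f : 'I_m) ((d <= f) : nat))%N = (m - d)%N.
Proof.
rewrite -(big_mkord xpredT (fun f => ((d <= f) : nat))).
elim: m => [|k IH]; first by rewrite big_geq.
rewrite big_nat_recr //= IH; case: (leqP d k) => h /=; lia.
Qed.

Lemma card_set_sum (T : finType) (P : pred T) : #|[set v | P v]| = \sum_v (P v : nat).
Proof. rewrite -sum1_card big_mkcond; apply: eq_bigr => v _; rewrite inE; by case: (P v). Qed.

Lemma kendall_lb (s : 'S_m) (x : {ffun 'I_m -> bool}) :
  (\sum_(j : 'I_m | j < d) (if x j then m - d - Bc s j else Bc s j) <= kendall s (rk x))%N.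
Proof.
rewrite kendall_sum.
set c := fun u v => ((s u < s v) && (rk x v < rk x u) : nat).
have step1 : (\sum_(u : 'I_m) \sum_(v : 'I_m) (((u < d) && (d <= v)) * c u v + ((v < d) && (d <= u)) * c u v)
   <= \sum_u \sum_v c u v)%N.
  apply: leq_sum => u _; apply: leq_sum => v _.
  case: (ltnP u d) => hu; case: (ltnP v d) => hv /=; rewrite ?mul0n ?mul1n; lia.
apply: leq_trans step1.
rewrite [X in (_ <= X)%N](eq_bigr (fun u : 'I_m => \sum_(v : 'I_m) ((u < d) && (d <= v)) * c u v + \sum_(v : 'I_m) ((v < d) && (d <= u)) * c u v)%N); last by move=> u _; rewrite big_split.
rewrite big_split /= [X in (_ <= _ + X)%N]exchange_big /=.
rewrite -big_split /= big_mkcond /=; apply: leq_sum => u _.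
rewrite -big_split /=.
case: (ltnP u d) => hu /=; last by [].
have hc (v : 'I_m) : (d <= v)%N -> (((u < d) && (d <= v)) * c u v + ((u < d) && (d <= v)) * c v u =
    (if x u then (s v < s u) else (s u < s v)))%N.
  move=> hv; rewrite hu hv /c !rk_lt /rkey hu (ltnNge v d) hv /= !mul1n.
  have hu' := ltn_ord u; have hv' := ltn_ord v.
  case: (x u) => /=.
    have -> : (m + v < u) = false by apply/negP; lia.
    have -> : (u < m + v) = true by apply/idP; lia.
    by rewrite andbF andbT.
  have -> : (2 * m + u < m + v) = false by apply/negP; lia.
  have -> : (m + v < 2 * m + u) = true by apply/idP; lia.
  by rewrite andbF andbT addn0.
have hB : Bc s u = (\sum_(v : 'I_m) ((d <= v) && (s u < s v) : nat))%N by rewrite /Bc card_set_sum.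
have hA : (\sum_(v : 'I_m) ((d <= v) && (s v < s u) : nat) + Bc s u = m - d)%N.
  rewrite hB -big_split -count_ge /=; apply: eq_bigr => v _.
  case: (leqP d v) => hv //=.
  have nuv : (s u : nat) != s v.
    apply/eqP => /ord_inj /perm_inj E; move: hv; rewrite -E; lia.
  move: nuv; case: (ltngtP (s u) (s v)) => //.
rewrite (eq_bigr (fun v : 'I_m => if (d <= v)%N then ((if x u then (s v < s u) else (s u < s v)) : nat) else 0%N)); last first.
  move=> v _; case: (leqP d v) => hv; first by move: (hc v hv); rewrite hu hv.
  by rewrite !mul0n.
case: (x u) => /=.
  rewrite (eq_bigr (fun v : 'I_m => ((d <= v) && (s v < s u) : nat))); last by move=> v _; case: (d <= v)%N.
  by rewrite -hA addnK.
rewrite (eq_bigr (fun v : 'I_m => ((d <= v) && (s u < s v) : nat))); last by move=> v _; case: (d <= v)%N.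
by rewrite hB.
Qed.
End Rank.
Section DPlemma.
Variables (R : realType) (T : finType).

Lemma dp_pos (mu1 mu2 h : T -> R) (E delta B : R) :
  (forall S : {set T}, \sum_(s in S) mu1 s <= E * \sum_(s in S) mu2 s + delta) ->
  0 <= B -> (forall s, 0 <= h s <= B) ->
  \sum_s mu1 s * h s <= E * \sum_s mu2 s * h s + delta * B.
Proof.
move=> hdp hB hh.
pose S := [set s | E * mu2 s < mu1 s].
have h1 : \sum_s mu1 s * h s <=
   \sum_s ((if s \in S then (mu1 s - E * mu2 s) * B else 0) + E * (mu2 s * h s)).
  apply: ler_sum => s _; have /andP[h0 hb] := hh s.
  case: ifP; rewrite inE => hs.
    have : 0 <= mu1 s - E * mu2 s by rewrite subr_ge0 ltW.
    move=> hpos; rewrite mulrA.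
    have := ler_wpM2l hpos hb; nra.
  rewrite add0r mulrA; apply: ler_wpM2r => //; by rewrite leNgt hs.
apply: (le_trans h1); rewrite big_split /= -big_mkcond /= -big_distrr /= addrC lerD2l.
rewrite -big_distrl /=; apply: ler_wpM2r => //.
rewrite sumrB -big_distrr /= lerBlDl; by move: (hdp S); rewrite [_ + delta]addrC.
Qed.
End DPlemma.
Section Polya.
Variables (R : realType) (n m : nat) (a : R).
Hypothesis ha : 0 < a.
Hypothesis hn : (0 < n)%N.

Definition Row := {ffun 'I_m -> bool}.
Definition Data := {ffun 'I_n -> Row}.

Definition upd (X : Data) (i : 'I_n) (b : Row) : Data :=
  [ffun k => if k == i then b else X k].
Definition Sn (X : Data) (j : 'I_m) : nat := (\sum_k (X k j : nat))%N.
Definition Smn (X : Data) (i : 'I_n) (j : 'I_m) : nat := (\sum_(k | k != i) (X k j : nat))%N.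
Definition Pp (t : nat) : R := \prod_(k < t) (a + k%:R).
Definition W (s : nat) : R := Pp s * Pp (n - s).
Definition mu (X : Data) : R := \prod_j W (Sn X j).
Definition den : R := (n%:R - 1) + 2 * a.
Definition cq (s : nat) : R := (s%:R + a) / den.
Definition qv (X : Data) (i : 'I_n) (j : 'I_m) : R := cq (Smn X i j).
Definition q (X : Data) i (b : Row) : R := pw (qv X i) b.

Lemma den_gt0 : 0 < den.
Proof. rewrite /den; have : 1 <= n%:R :> R by rewrite ler1n. move: ha; lra. Qed.

Lemma Sn_split X i j : Sn X j = (Smn X i j + X i j)%N.
Proof. by rewrite /Sn (bigD1 i) //= addnC. Qed.

Lemma upd_at X i b : upd X i b i = b.
Proof. by rewrite ffunE eqxx. Qed.

Lemma upd_upd X i b c : upd (upd X i b) i c = upd X i c.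
Proof. apply/ffunP => k; rewrite !ffunE; by case: (k == i). Qed.

Lemma upd_self X i : upd X i (X i) = X.
Proof. apply/ffunP => k; rewrite !ffunE; by case: eqP => [->|]. Qed.

Lemma Smn_upd X i b j : Smn (upd X i b) i j = Smn X i j.
Proof. apply: eq_bigr => k /negPf ki; by rewrite ffunE ki. Qed.

Lemma Sn_upd X i b j : Sn (upd X i b) j = (Smn X i j + b j)%N.
Proof. by rewrite (Sn_split _ i) Smn_upd upd_at. Qed.

Lemma q_upd X i b c : q (upd X i b) i c = q X i c.
Proof. rewrite /q /pw; apply: eq_bigr => j _; by rewrite /qv Smn_upd. Qed.

Lemma Smn_le X i j : (Smn X i j <= n.-1)%N.
Proof.
apply: (@leq_trans (\sum_(k | k != i) 1)%N); first by apply: leq_sum => k _; case: (X k j).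
by rewrite sum1_card cardC1 card_ord.
Qed.

Lemma cq_01 X i j : 0 <= qv X i j <= 1.
Proof.
rewrite /qv /cq; have := Smn_le X i j; set s := Smn X i j => hs.
have hd := den_gt0.
have hs' : (s%:R : R) <= n%:R - 1.
  by rewrite -(prednK hn) -natr1 addrK ler_nat.
have h0 : (0 : R) <= s%:R by rewrite ler0n.
apply/andP; split.
  apply: divr_ge0; last exact: ltW.
  by rewrite addr_ge0 // ltW.
rewrite ler_pdivrMr // mul1r /den; move: ha; lra.
Qed.

Lemma Pp_succ t : Pp t.+1 = Pp t * (a + t%:R).
Proof. by rewrite /Pp big_ord_recr. Qed.

Lemma Pp_gt0 t : 0 < Pp t.
Proof. apply: prodr_gt0 => k _; rewrite ltr_wpDr //. Qed.

Lemma W_bal s : (s <= n.-1)%N -> W s.+1 * (1 - cq s) = W s * cq s.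
Proof.
move=> hs; rewrite /W /cq.
have e : (n - s = (n - s.+1).+1)%N by rewrite -(prednK hn) in hs *; rewrite subSS subSn.
rewrite e Pp_succ Pp_succ.
have hd := den_gt0.
have e2 : ((n - s.+1)%:R : R) = n%:R - 1 - s%:R.
  rewrite natrB; last by rewrite -(prednK hn) in hs *; rewrite ltnS.
  by rewrite -natr1 opprD addrA addrAC.
rewrite e2; move: hd; rewrite /den => hd; field; rewrite gt_eqF //.
Qed.

Lemma col_bal s (x b : bool) : (s <= n.-1)%N ->
  W (s + x) * bern (cq s) b = W (s + b) * bern (cq s) x.
Proof.
move=> hs; case: x; case: b => //=; rewrite addn1 addn0.
  by rewrite W_bal.
by rewrite W_bal.
Qed.

Lemma detbal X i b : mu X * q X i b = mu (upd X i b) * q X i (X i).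
Proof.
rewrite /mu /q /pw -!big_split /=; apply: eq_bigr => j _.
by rewrite Sn_upd (Sn_split X i) col_bal // Smn_le.
Qed.

Lemma q_sum1 X i : \sum_b q X i b = 1.
Proof. exact: pw_sum1. Qed.

Lemma q_ge0 X i b : 0 <= q X i b.
Proof. apply: pw_ge0 => k; exact: cq_01. Qed.

Lemma mu_gt0 X : 0 < mu X.
Proof. apply: prodr_gt0 => j _; apply: mulr_gt0; exact: Pp_gt0. Qed.

Lemma gibbs (F : Data -> R) i :
  \sum_X mu X * F X = \sum_X mu X * \sum_b q X i b * F (upd X i b).
Proof.
symmetry.
transitivity (\sum_X \sum_b mu (upd X i b) * q X i (X i) * F (upd X i b)).
  apply: eq_bigr => X _; rewrite big_distrr /=; apply: eq_bigr => b _.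
  by rewrite mulrA detbal.
rewrite pair_bigA /=.
pose h (p : Data * Row) := (upd p.1 i p.2, p.1 i).
have hK : cancel h h by move=> [X b]; rewrite /h /= upd_upd upd_self upd_at.
rewrite (reindex_inj (can_inj hK)) /=.
under eq_bigr => p _ do rewrite /h /= upd_upd upd_self upd_at q_upd.
rewrite -(pair_bigA _ (fun X b => mu X * q X i b * F X)) /=.
apply: eq_bigr => X _.
by rewrite -big_distrl /= -big_distrr /= q_sum1 mulr1 mulrC.
Qed.

Definition Zs : R := \sum_X mu X.

Lemma Zs_gt0 : 0 < Zs.
Proof.
rewrite /Zs (bigD1 [ffun=> [ffun=> false]]) //=; apply: ltr_pwDl; first exact: mu_gt0.
apply: sumr_ge0 => X _; exact: ltW (mu_gt0 X).
Qed.

Lemma Eaff (f : Data -> R) c1 c2 :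
  \sum_X mu X * (c1 * f X + c2) = c1 * (\sum_X mu X * f X) + c2 * Zs.
Proof.
rewrite /Zs !big_distrr -big_split /=; apply: eq_bigr => X _; ring.
Qed.

Lemma bv1 : bv true = 1 :> R. Proof. by rewrite /bv /= mulr1n. Qed.
Lemma bv0 : bv false = 0 :> R. Proof. by rewrite /bv /= mulr0n. Qed.

Lemma bv_sum (X : Data) (j : 'I_m) : \sum_i bv (X i j) = (Sn X j)%:R :> R.
Proof. by rewrite /Sn natr_sum. Qed.

Lemma Smn_R (X : Data) (i : 'I_n) (j : 'I_m) : (Smn X i j)%:R = (Sn X j)%:R - bv (X i j) :> R.
Proof. by rewrite (Sn_split X i j) natrD addrK. Qed.

Lemma sum_aff (X : Data) (j : 'I_m) (A B : R) :
  \sum_i (A + B * bv (X i j)) = n%:R * A + B * (Sn X j)%:R.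
Proof.
by rewrite big_split /= sumr_const card_ord -big_distrr /= bv_sum mulr_natl.
Qed.

Lemma gibbs_marg (i : 'I_n) (j : 'I_m) (g : bool -> R) (h : Data -> R) :
  (forall X b, h (upd X i b) = h X) ->
  \sum_X mu X * (g (X i j) * h X) =
  \sum_X mu X * ((qv X i j * g true + (1 - qv X i j) * g false) * h X).
Proof.
move=> hh; rewrite (gibbs _ i); apply: eq_bigr => X _; congr (_ * _).
rewrite (eq_bigr (fun b => q X i b * g (b j) * h X)); last first.
  by move=> b _; rewrite upd_at hh mulrA.
by rewrite -big_distrl /= /q pw_marg.
Qed.

Lemma cq_sum (X : Data) (j : 'I_m) :
  \sum_i cq (Smn X i j) = (n%:R - 1) / den * (Sn X j)%:R + n%:R * a / den.
Proof.
rewrite /cq (eq_bigr (fun i => (a / den + 1/den * (Sn X j)%:R) + (- (1/den)) * bv (X i j))); last first.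
  by move=> i _; rewrite Smn_R; field; rewrite gt_eqF ?den_gt0.
by rewrite sum_aff; field; rewrite gt_eqF ?den_gt0.
Qed.

Lemma gibbs_marg0 (i : 'I_n) (j : 'I_m) (g : bool -> R) :
  \sum_X mu X * g (X i j) =
  \sum_X mu X * (qv X i j * g true + (1 - qv X i j) * g false).
Proof.
rewrite (gibbs _ i); apply: eq_bigr => X _; congr (_ * _).
rewrite (eq_bigr (fun b => q X i b * g (b j))); last by move=> b _; rewrite upd_at.
by rewrite /q pw_marg.
Qed.

Lemma ES (j : 'I_m) : \sum_X mu X * (Sn X j)%:R = n%:R / 2 * Zs.
Proof.
set ES := \sum_X mu X * (Sn X j)%:R.
have H : ES = ((n%:R - 1) / den) * ES + (n%:R * a / den) * Zs.
  rewrite -Eaff.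
  under [RHS]eq_bigr => X _ do rewrite -cq_sum big_distrr /=.
  rewrite /ES; under [LHS]eq_bigr => X _ do rewrite -bv_sum big_distrr /=.
  rewrite exchange_big [RHS]exchange_big /=; apply: eq_bigr => i _.
  rewrite (gibbs_marg0 i j (fun t => bv t)); apply: eq_bigr => X _; by rewrite bv1 bv0 mulr1 mulr0 addr0 /qv.
have hd := den_gt0.
have E2 : a * (2 * ES - n%:R * Zs) = den * (ES - ((n%:R - 1) / den * ES + n%:R * a / den * Zs)).
  rewrite /den; field; rewrite gt_eqF // -/den //.
rewrite -H subrr mulr0 in E2.
move/eqP: E2; rewrite mulf_eq0 gt_eqF //= subr_eq0 => /eqP E3.
rewrite (_ : ES = (2 * ES) / 2); last by field.
by rewrite E3; field.
Qed.

Lemma EV (j : 'I_m) :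
  (\sum_X mu X * ((Sn X j)%:R * (n%:R - (Sn X j)%:R))) * (2 + 4 * a) =
  n%:R * (n%:R - 1) * a * Zs.
Proof.
set V := \sum_X mu X * ((Sn X j)%:R * (n%:R - (Sn X j)%:R)).
have hd := den_gt0.
have H : 2 * V = (2 * (n%:R - 2) / den) * V + (n%:R * a * (n%:R - 1) / den) * Zs.
  rewrite -Eaff.
  transitivity (\sum_i \sum_X mu X * (bv (X i j) * (n%:R - 1 - (Smn X i j)%:R)
                                   + (1 - bv (X i j)) * (Smn X i j)%:R)).
    rewrite exchange_big /V big_distrr; apply: eq_bigr => X _ /=; rewrite -big_distrr /=.
    rewrite (eq_bigr (fun i => (Sn X j)%:R + (n%:R - 2 * (Sn X j)%:R) * bv (X i j))); last first.
      by move=> i _; rewrite Smn_R; case: (X i j); rewrite ?bv1 ?bv0; ring.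
    rewrite sum_aff; ring.
  transitivity (\sum_i \sum_X mu X * (qv X i j * (n%:R - 1 - (Smn X i j)%:R)
                                   + (1 - qv X i j) * (Smn X i j)%:R)).
    apply: eq_bigr => i _.
    under eq_bigr => X _ do rewrite mulrDr.
    rewrite big_split /=.
    rewrite (gibbs_marg i j (fun t => bv t) (fun X => n%:R - 1 - (Smn X i j)%:R)); last first.
      by move=> X b; rewrite Smn_upd.
    rewrite (gibbs_marg i j (fun t => 1 - bv t) (fun X => (Smn X i j)%:R)); last first.
      by move=> X b; rewrite Smn_upd.
    rewrite -big_split /=; apply: eq_bigr => X _; rewrite bv1 bv0; ring.
  rewrite exchange_big; apply: eq_bigr => X _ /=; rewrite -big_distrr /=; congr (_ * _).
  rewrite (eq_bigr (fun i => (2 * (Sn X j)%:R * (n%:R - 1 - (Sn X j)%:R) + a * (n%:R - 1)) / den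
                           + (2 * (2 * (Sn X j)%:R - n%:R) / den) * bv (X i j))); last first.
    move=> i _; rewrite /qv /cq Smn_R; case: (X i j); rewrite ?bv1 ?bv0 /den; field;
    by rewrite gt_eqF.
  rewrite sum_aff; field; by rewrite gt_eqF.
have E : V * (2 + 4 * a) - n%:R * (n%:R - 1) * a * Zs =
         den * (2 * V - ((2 * (n%:R - 2) / den) * V + (n%:R * a * (n%:R - 1) / den) * Zs)).
  move: hd; rewrite /den => hd; field; by rewrite gt_eqF.
by move: E; rewrite -H subrr mulr0 => /eqP; rewrite subr_eq0 => /eqP.
Qed.

Variables (d : nat) (M : mechanism R n m).
Hypothesis hdm : (d <= m)%N.
Hypothesis hM : is_randomized_alg M.

Definition inp (X : Data) : input n m := [ffun k => rk m d (X k)].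
Definition Lr : R := (m - d)%:R.
Definition w (s : 'S_m) (j : 'I_m) : R := if (j < d)%N then (Bc m d s j)%:R else 0.
Definition Hh (i : 'I_n) (X : Data) (s : 'S_m) : R := \sum_j w s j * (bv (X i j) - qv X i j).

Lemma Bc_le s j : (Bc m d s j <= m - d)%N.
Proof.
rewrite /Bc card_set_sum -count_ge; apply: leq_sum => f _; case: (d <= f)%N => //=; exact: leq_b1.
Qed.

Lemma w_bnd s j : 0 <= w s j <= Lr.
Proof.
rewrite /w /Lr; case: ifP => _; last by rewrite lexx ler0n.
by rewrite ler0n ler_nat Bc_le.
Qed.

Lemma Lr_ge0 : 0 <= Lr. Proof. exact: ler0n. Qed.

Lemma H_bnd i X s : Hh i X s <= m%:R * Lr.
Proof.
rewrite /Hh (_ : m%:R * Lr = \sum_(j : 'I_m) Lr); last by rewrite sumr_const card_ord mulr_natl.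
apply: ler_sum => j _.
have /andP[w0 w1] := w_bnd s j; have /andP[q0 q1] := cq_01 X i j.
have hb : bv (X i j) <= 1 :> R by case: (X i j); rewrite ?bv1 ?bv0 ?ler01.
have : bv (X i j) - qv X i j <= 1 by move: q0 hb; lra.
move=> h; apply: (le_trans (ler_wpM2l w0 h)); move: w1; lra.
Qed.

Lemma M_ge0 P s : 0 <= M P s. Proof. by have [h _] := hM P; exact: h. Qed.
Lemma M_sum1 P : \sum_s M P s = 1. Proof. by have [_ h] := hM P. Qed.

Lemma trace_id X s :
  \sum_i Hh i X s = a / den * \sum_j w s j * (2 * (Sn X j)%:R - n%:R).
Proof.
rewrite /Hh exchange_big big_distrr /=; apply: eq_bigr => j _.
rewrite -big_distrr /= sumrB bv_sum.
have -> : \sum_i qv X i j = \sum_i cq (Smn X i j) by [].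
rewrite cq_sum; have hd := den_gt0; move: hd; rewrite /den => hd; field.
by rewrite gt_eqF.
Qed.

Lemma inp_nb X i y : neighboring (inp X) (inp (upd X i y)).
Proof. by exists i => k /negPf ki; rewrite !ffunE ki. Qed.

Definition Av i X (f : 'S_m -> R) : R :=
  \sum_y q X i y * \sum_s M (inp (upd X i y)) s * f s.

Lemma Av_upd i X b f : Av i (upd X i b) f = Av i X f.
Proof. rewrite /Av; apply: eq_bigr => y _; by rewrite q_upd upd_upd. Qed.

Lemma Av_lin i X f g c : Av i X (fun s => f s + c * g s) = Av i X f + c * Av i X g.
Proof.
rewrite /Av big_distrr -big_split /=; apply: eq_bigr => y _.
rewrite mulrCA -mulrDr; congr (_ * _).
rewrite big_distrr -big_split /=; apply: eq_bigr => s _; ring.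
Qed.

Lemma Av_const i X c : Av i X (fun _ => c) = c.
Proof.
rewrite /Av (eq_bigr (fun y => q X i y * c)); last first.
  by move=> y _; rewrite -big_distrl /= M_sum1 mul1r.
by rewrite -big_distrl /= q_sum1 mul1r.
Qed.

Lemma Av_le i X f g : (forall s, f s <= g s) -> Av i X f <= Av i X g.
Proof.
move=> h; apply: ler_sum => y _; apply: ler_wpM2l; first exact: q_ge0.
apply: ler_sum => s _; apply: ler_wpM2l; [exact: M_ge0 | exact: h].
Qed.

Lemma zero_mean i : \sum_X mu X * Av i X (Hh i X) = 0.
Proof.
pose Phi X j := Av i X (fun s => w s j).
have E1 X : Av i X (Hh i X) = \sum_j (bv (X i j) * Phi X j - qv X i j * Phi X j).
  rewrite /Hh /Phi /Av.
  under eq_bigr => y _ do (under eq_bigr => s _ do rewrite big_distrr /=; rewrite exchange_big /=; rewrite big_distrr /=).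
  rewrite exchange_big /=; apply: eq_bigr => j _.
  rewrite !big_distrr -sumrB /=; apply: eq_bigr => y _.
  rewrite !big_distrr -sumrB /=; apply: eq_bigr => s _; ring.
under eq_bigr => X _ do rewrite E1 big_distrr /=.
rewrite exchange_big /=; apply: big1 => j _.
under eq_bigr => X _ do rewrite mulrBr.
rewrite sumrB.
rewrite (gibbs_marg i j (fun t => bv t) (fun X => Phi X j)); last first.
  by move=> X b; rewrite /Phi Av_upd.
rewrite bv1 bv0; apply/eqP; rewrite subr_eq0; apply/eqP.
apply: eq_bigr => X _; by rewrite mulr1 mulr0 addr0.
Qed.

Lemma Av_sumr i X (c : Row -> R) (f : Row -> 'S_m -> R) :
  \sum_b c b * Av i X (f b) = Av i X (fun s => \sum_b c b * f b s).
Proof.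
rewrite /Av.
under eq_bigr => b _ do rewrite big_distrr /=.
rewrite exchange_big /=; apply: eq_bigr => y _.
under eq_bigr => b _ do rewrite mulrCA big_distrr /=.
rewrite -big_distrr /=; congr (_ * _).
rewrite exchange_big /=; apply: eq_bigr => s _.
rewrite big_distrr /=; apply: eq_bigr => b _; ring.
Qed.

Lemma qv_upd X i b j : qv (upd X i b) i j = qv X i j.
Proof. by rewrite /qv Smn_upd. Qed.

Lemma var_bound i :
  \sum_X mu X * Av i X (fun s => Hh i X s ^+ 2) <= Zs * (m%:R * Lr ^+ 2 / 4).
Proof.
rewrite (gibbs _ i) /Zs big_distrl /=; apply: ler_sum => X _.
apply: ler_wpM2l; first exact: ltW (mu_gt0 X).
under eq_bigr => b _ do rewrite Av_upd.
rewrite Av_sumr.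
rewrite -[X in _ <= X](Av_const i X).
apply: Av_le => s.
rewrite (eq_bigr (fun b => q X i b * (\sum_j w s j * (bv (b j) - qv X i j)) ^+ 2)); last first.
  move=> b _; congr (_ * (_ ^+ 2)); rewrite /Hh; apply: eq_bigr => j _.
  by rewrite upd_at qv_upd.
rewrite /q pw_var.
rewrite (_ : m%:R * Lr ^+ 2 / 4 = \sum_(j : 'I_m) Lr ^+ 2 / 4); last first.
  by rewrite sumr_const card_ord -mulr_natl; ring.
apply: ler_sum => j _.
have /andP[w0 w1] := w_bnd s j; have /andP[q0 q1] := cq_01 X i j.
have h1 : w s j ^+ 2 <= Lr ^+ 2 by rewrite ler_sqr // ?Lr_ge0 ?nnegrE ?Lr_ge0.
have h2 : qv X i j * (1 - qv X i j) <= 1 / 4.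
  have := sqr_ge0 (qv X i j - 1/2); nra.
have h3 : 0 <= qv X i j * (1 - qv X i j) by apply: mulr_ge0; lra.
have h4 : w s j ^+ 2 * (qv X i j * (1 - qv X i j)) <= Lr ^+ 2 * (qv X i j * (1 - qv X i j)).
  by apply: ler_wpM2r.
have h5 : Lr ^+ 2 * (qv X i j * (1 - qv X i j)) <= Lr ^+ 2 * (1 / 4).
  by apply: ler_wpM2l; rewrite ?sqr_ge0.
by apply: (le_trans h4); apply: (le_trans h5); rewrite mul1r.
Qed.

Lemma row_bound i X delta t : is_DP 1 delta M -> 0 < t ->
  \sum_s M (inp X) s * Hh i X s <=
  expR 1 * Av i X (fun s => Hh i X s / 2 + Hh i X s ^+ 2 / (4 * t) + t / 4)
  + delta * (m%:R * Lr).
Proof.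
move=> hdp ht.
have hB : 0 <= m%:R * Lr by rewrite mulr_ge0 // ?ler0n ?Lr_ge0.
have key y : \sum_s M (inp X) s * Hh i X s <=
   expR 1 * \sum_s M (inp (upd X i y)) s * (Hh i X s / 2 + Hh i X s ^+ 2 / (4 * t) + t / 4)
   + delta * (m%:R * Lr).
  apply: (@le_trans _ _ (\sum_s M (inp X) s * Num.max (Hh i X s) 0)).
    apply: ler_sum => s _; apply: ler_wpM2l; first exact: M_ge0.
    by rewrite le_max lexx.
  apply: (le_trans (@dp_pos R _ (M (inp X)) (M (inp (upd X i y))) (fun s => Num.max (Hh i X s) 0) (expR 1) delta (m%:R * Lr) (hdp _ _ (inp_nb X i y)) hB _)).
    move=> s; rewrite le_max lexx orbT /= ge_max H_bnd hB //.
  rewrite lerD2r; apply: ler_wpM2l; first exact: expR_ge0.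
  apply: ler_sum => s _; apply: ler_wpM2l; first exact: M_ge0.
  set h := Hh i X s; rewrite ge_max; apply/andP; split.
    have -> : h / 2 + h ^+ 2 / (4 * t) + t / 4 = h + (h - t) ^+ 2 / (4 * t).
      by field; rewrite gt_eqF.
    by rewrite lerDl divr_ge0 ?sqr_ge0 // mulr_ge0 // ltW.
  have -> : h / 2 + h ^+ 2 / (4 * t) + t / 4 = (h + t) ^+ 2 / (4 * t).
    by field; rewrite gt_eqF.
  by rewrite divr_ge0 ?sqr_ge0 // mulr_ge0 // ltW.
set LHS := \sum_s M (inp X) s * Hh i X s.
set B := delta * (m%:R * Lr).
have E1 : LHS = \sum_y q X i y * LHS by rewrite -big_distrl /= q_sum1 mul1r.
have E2 : B = \sum_y q X i y * B by rewrite -big_distrl /= q_sum1 mul1r.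
rewrite E1 E2 /Av big_distrr /= -big_split /=.
apply: ler_sum => y _; rewrite mulrCA -mulrDr; apply: ler_wpM2l; first exact: q_ge0.
exact: key.
Qed.

Lemma eq_leR (x y : R) : x = y -> x <= y. Proof. by move->. Qed.

Lemma n_gt0R : 0 < n%:R :> R. Proof. by rewrite ltr0n. Qed.

Lemma Sn_le X j : (Sn X j <= n)%N.
Proof.
rewrite /Sn -[n in (_ <= n)%N]card_ord -sum1_card; apply: leq_sum => k _; exact: leq_b1.
Qed.

Lemma sumK_lb (X : Data) (s : 'S_m) :
  Lr * \sum_(j : 'I_m | (j < d)%N) (Sn X j)%:R - \sum_j w s j * (2 * (Sn X j)%:R - n%:R)
  <= (sumK (inp X) s)%:R.
Proof.
have h1 : (\sum_k \sum_(j : 'I_m | (j < d)%N) (if X k j then m - d - Bc m d s j else Bc m d s j)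
           <= sumK (inp X) s)%N.
  rewrite /sumK; apply: leq_sum => k _; rewrite ffunE; exact: kendall_lb.
apply: le_trans (_ : _ <= (\sum_k \sum_(j : 'I_m | (j < d)%N) (if X k j then m - d - Bc m d s j else Bc m d s j))%:R) _; last by rewrite ler_nat.
rewrite natr_sum; under eq_bigr => k _ do rewrite natr_sum; rewrite exchange_big /=.
rewrite [X in _ <= X](eq_bigr (fun j => (Lr * (Sn X j)%:R - (Bc m d s j)%:R * (2 * (Sn X j)%:R - n%:R)))); last first.
  move=> j _.
  rewrite (eq_bigr (fun k => (Bc m d s j)%:R + (Lr - 2 * (Bc m d s j)%:R) * bv (X k j))); last first.
    move=> k _; case: (X k j); rewrite ?bv1 ?bv0 /Lr.
      rewrite natrB ?Bc_le // natrB //; ring.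
    ring.
  rewrite sum_aff; ring.
rewrite sumrB -big_distrr /=; apply: lerD => //.
rewrite lerN2 big_mkcond /=; apply: eq_leR; apply: eq_bigr => j _.
by rewrite /w; case: ifP => //; rewrite mul0r.
Qed.

Definition maj (X : Data) : Row := [ffun j => (n < 2 * Sn X j)%N].

Lemma disagree_le (X : Data) (j : 'I_m) :
  \sum_k ((X k j != maj X j) : nat)%:R <= 2 * (Sn X j)%:R * (n%:R - (Sn X j)%:R) / n%:R :> R.
Proof.
have hS := Sn_le X j; have hn0 := n_gt0R.
have hSR : (Sn X j)%:R <= n%:R :> R by rewrite ler_nat.
have hS0 : 0 <= (Sn X j)%:R :> R by rewrite ler0n.
rewrite ler_pdivlMr // /maj ffunE.
case: (ltnP n (2 * Sn X j)) => h.
  have hR : n%:R < 2 * (Sn X j)%:R :> R by rewrite -natrM ltr_nat.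
  rewrite (eq_bigr (fun k => 1 + (-1) * bv (X k j))); last first.
    by move=> k _; case: (X k j); rewrite ?bv1 ?bv0 /=; ring.
  rewrite sum_aff; nra.
have hR : 2 * (Sn X j)%:R <= n%:R :> R by rewrite -natrM ler_nat.
rewrite (eq_bigr (fun k => 0 + 1 * bv (X k j))); last first.
  by move=> k _; case: (X k j); rewrite ?bv1 ?bv0 /=; ring.
rewrite sum_aff; nra.
Qed.

Lemma OPT_ub (X : Data) :
  n%:R * OPT R (inp X) <= 4 * m%:R / n%:R * \sum_(j : 'I_m | (j < d)%N) ((Sn X j)%:R * (n%:R - (Sn X j)%:R)).
Proof.
have hn0 := n_gt0R.
rewrite /OPT mulrC divfK ?gt_eqF //.
case: (arg_minnP (sumK (inp X)) (erefl true : xpredT (1%g : 'S_m))) => s0 _ hmin.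
apply: (le_trans (_ : _ <= (sumK (inp X) (rk m d (maj X)))%:R)); first by rewrite ler_nat hmin.
have h1 : (sumK (inp X) (rk m d (maj X)) <= \sum_k 2 * m * \sum_j (Dset m d (X k) (maj X) j : nat))%N.
  rewrite /sumK; apply: leq_sum => k _; rewrite ffunE; exact: kendall_ub.
apply: (le_trans (_ : _ <= (\sum_k 2 * m * \sum_j (Dset m d (X k) (maj X) j : nat))%N%:R)); first by rewrite ler_nat.
rewrite -big_distrr /= natrM natr_sum; under eq_bigr => k _ do rewrite natr_sum.
rewrite exchange_big /= [X in _ <= _ * X]big_mkcond /= !big_distrr /=.
apply: ler_sum => j _.
case: ifP => hj.
  rewrite (eq_bigr (fun k => ((X k j != maj X j) : nat)%:R)); last by move=> k _; rewrite /Dset hj.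
  have := disagree_le X j.
  have h2 : (0 : R) <= (2 * m)%:R by rewrite ler0n.
  move=> h; apply: (le_trans (ler_wpM2l h2 h)); apply: eq_leR; rewrite natrM; field; by rewrite gt_eqF.
rewrite big1 ?mulr0 ?mul0r ?mulr0 //; by move=> k _; rewrite /Dset hj.
Qed.

Lemma acc_X (X : Data) alpha beta : 0 <= alpha -> is_approx alpha beta M ->
  Lr * \sum_(j : 'I_m | (j < d)%N) (Sn X j)%:R
  - alpha * (4 * m%:R / n%:R * \sum_(j : 'I_m | (j < d)%N) ((Sn X j)%:R * (n%:R - (Sn X j)%:R)))
  - n%:R * beta
  <= \sum_s M (inp X) s * \sum_j w s j * (2 * (Sn X j)%:R - n%:R).
Proof.
move=> ha0 happ; have hn0 := n_gt0R.
have h1 := happ (inp X).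
have h2 : \sum_s M (inp X) s * (sumK (inp X) s)%:R <= alpha * (n%:R * OPT R (inp X)) + n%:R * beta.
  have -> : \sum_s M (inp X) s * (sumK (inp X) s)%:R = n%:R * \sum_s M (inp X) s * Kbar R s (inp X).
    rewrite big_distrr /=; apply: eq_bigr => s _; rewrite /Kbar; field; by rewrite gt_eqF.
  rewrite mulrCA -mulrDr; apply: ler_wpM2l; first exact: ltW.
  exact: h1.
have h3 : alpha * (n%:R * OPT R (inp X)) <= alpha * (4 * m%:R / n%:R * \sum_(j : 'I_m | (j < d)%N) ((Sn X j)%:R * (n%:R - (Sn X j)%:R))).
  by apply: ler_wpM2l => //; exact: OPT_ub.
set SS := \sum_(j : 'I_m | (j < d)%N) (Sn X j)%:R.
have h4 : \sum_s M (inp X) s * (Lr * SS - \sum_j w s j * (2 * (Sn X j)%:R - n%:R))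
          <= \sum_s M (inp X) s * (sumK (inp X) s)%:R.
  apply: ler_sum => s _; apply: ler_wpM2l; [exact: M_ge0 | exact: sumK_lb].
have h5 : \sum_s M (inp X) s * (Lr * SS - \sum_j w s j * (2 * (Sn X j)%:R - n%:R))
          = Lr * SS - \sum_s M (inp X) s * \sum_j w s j * (2 * (Sn X j)%:R - n%:R).
  rewrite (eq_bigr (fun s => Lr * SS * M (inp X) s - M (inp X) s * \sum_j w s j * (2 * (Sn X j)%:R - n%:R))); last by move=> s _; ring.
  by rewrite sumrB -big_distrr /= M_sum1 mulr1.
move: h4; rewrite h5 => h4.
have := le_trans h4 (le_trans h2 (lerD h3 (lexx _))).
set G := \sum_s _; move=> h6; move: h6; lra.
Qed.

Lemma Av_aff i X (f g : 'S_m -> R) c1 c2 c3 :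
  Av i X (fun s => c1 * f s + c2 * g s + c3) = c1 * Av i X f + c2 * Av i X g + c3.
Proof.
rewrite /Av.
rewrite (eq_bigr (fun y => c1 * (q X i y * \sum_s M (inp (upd X i y)) s * f s)
     + c2 * (q X i y * \sum_s M (inp (upd X i y)) s * g s) + c3 * q X i y)); last first.
  move=> y _.
  have -> : \sum_s M (inp (upd X i y)) s * (c1 * f s + c2 * g s + c3) =
     c1 * \sum_s M (inp (upd X i y)) s * f s + c2 * \sum_s M (inp (upd X i y)) s * g s
     + c3 * \sum_s M (inp (upd X i y)) s.
    rewrite !big_distrr -!big_split /=; apply: eq_bigr => s _; ring.
  rewrite M_sum1; ring.
by rewrite !big_split /= -!big_distrr /= q_sum1 mulr1.
Qed.

Lemma count_lt : (\sum_(j : 'I_m | (j < d)%N) 1 = d)%N.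
Proof.
have h1 := count_ge m d.
have h2 : (\sum_(j : 'I_m) ((j < d)%N : nat) + \sum_(j : 'I_m) ((d <= j)%N : nat) = m)%N.
  rewrite -big_split /= (eq_bigr (fun _ => 1%N)); last by move=> j _; case: ltnP.
  by rewrite sum1_card card_ord.
have h3 : (\sum_(j : 'I_m | (j < d)%N) 1 = \sum_(j : 'I_m) ((j < d)%N : nat))%N.
  by rewrite big_mkcond; apply: eq_bigr => j _; case: ifP.
lia.
Qed.

Lemma sum_lt_const (c : R) : \sum_(j : 'I_m | (j < d)%N) c = d%:R * c.
Proof.
rewrite -[in RHS]count_lt natr_sum big_distrl /=; apply: eq_bigr => j _; by rewrite mul1r.
Qed.


Lemma EV_le (j : 'I_m) :
  \sum_X mu X * ((Sn X j)%:R * (n%:R - (Sn X j)%:R)) <= n%:R ^+ 2 * a / 2 * Zs.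
Proof.
have h4 : 0 < 2 + 4 * a by move: ha; lra.
rewrite -(ler_pM2r h4) EV.
have hZ := Zs_gt0; have hn0 := n_gt0R.
have hP : 0 <= n%:R * a * Zs by rewrite !mulr_ge0 // ltW.
have han : 0 <= a * n%:R by rewrite mulr_ge0 // ltW.
have -> : n%:R ^+ 2 * a / 2 * Zs * (2 + 4 * a) = n%:R * (n%:R * a * Zs) * (1 + 2 * a) by field.
have -> : n%:R * (n%:R - 1) * a * Zs = (n%:R - 1) * (n%:R * a * Zs) by ring.
nra.
Qed.

Lemma Av_ext i X (f g : 'S_m -> R) : (forall s, f s = g s) -> Av i X f = Av i X g.
Proof.
move=> h; rewrite /Av; apply: eq_bigr => y _; congr (_ * _); apply: eq_bigr => s _; by rewrite h.
Qed.

Lemma E3lin (A B : Data -> R) c1 c2 c3 :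
  \sum_X mu X * (c1 * A X - c2 * B X - c3) =
  c1 * \sum_X mu X * A X - c2 * \sum_X mu X * B X - c3 * Zs.
Proof.
rewrite /Zs !big_distrr /= -!sumrB; apply: eq_bigr => X _; ring.
Qed.

Lemma Eswap (f : Data -> 'I_m -> R) :
  \sum_X mu X * \sum_(j : 'I_m | (j < d)%N) f X j =
  \sum_(j : 'I_m | (j < d)%N) \sum_X mu X * f X j.
Proof.
under eq_bigr => X _ do rewrite big_distrr /=.
by rewrite exchange_big.
Qed.

Lemma E4lin (A B : Data -> R) e c1 c2 c3 c4 :
  \sum_X mu X * (e * (c1 * A X + c2 * B X + c3) + c4) =
  e * (c1 * \sum_X mu X * A X + c2 * \sum_X mu X * B X + c3 * Zs) + c4 * Zs.
Proof.
rewrite /Zs !big_distrr /= -!big_split /= !big_distrr /= -!big_split /=.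
apply: eq_bigr => X _; ring.
Qed.

Lemma main_ineq alpha beta delta t :
  0 <= alpha -> 0 < t -> is_DP 1 delta M -> is_approx alpha beta M ->
  a / den * (Lr * (d%:R * (n%:R / 2 * Zs))
             - alpha * (4 * m%:R / n%:R * (d%:R * (n%:R ^+ 2 * a / 2 * Zs)))
             - n%:R * beta * Zs)
  <= n%:R * (expR 1 * (1 / (4 * t) * (Zs * (m%:R * Lr ^+ 2 / 4)) + t / 4 * Zs)
             + delta * (m%:R * Lr) * Zs).
Proof.
move=> hal ht hdp happ.
have hd := den_gt0; have hZ := Zs_gt0; have hn0 := n_gt0R.
set T := \sum_X mu X * \sum_s M (inp X) s * \sum_i Hh i X s.
apply: (@le_trans _ _ T).
  have -> : T = a / den * \sum_X mu X * \sum_s M (inp X) s * \sum_j w s j * (2 * (Sn X j)%:R - n%:R).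
    rewrite /T big_distrr /=; apply: eq_bigr => X _; rewrite mulrCA; congr (_ * _).
    rewrite big_distrr /=; apply: eq_bigr => s _; by rewrite trace_id mulrCA.
  apply: ler_wpM2l; first by rewrite divr_ge0 // ltW.
  set c := alpha * (4 * m%:R / n%:R).
  have hc : 0 <= c by rewrite /c mulr_ge0 // divr_ge0 // ?mulr_ge0 // ?ler0n // ltW.
  apply: (@le_trans _ _ (\sum_X mu X * (Lr * \sum_(j : 'I_m | (j < d)%N) (Sn X j)%:R
      - c * \sum_(j : 'I_m | (j < d)%N) ((Sn X j)%:R * (n%:R - (Sn X j)%:R)) - n%:R * beta))); last first.
    apply: ler_sum => X _; apply: ler_wpM2l; first exact: ltW (mu_gt0 X).
    rewrite /c -mulrA; exact: acc_X.
  rewrite (E3lin (fun X => \sum_(j : 'I_m | (j < d)%N) (Sn X j)%:R)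
                 (fun X => \sum_(j : 'I_m | (j < d)%N) ((Sn X j)%:R * (n%:R - (Sn X j)%:R)))).
  rewrite !Eswap.
  rewrite (eq_bigr (fun j => n%:R / 2 * Zs)); last by move=> j _; rewrite ES.
  rewrite sum_lt_const.
  have hV : \sum_(j : 'I_m | (j < d)%N) \sum_X mu X * ((Sn X j)%:R * (n%:R - (Sn X j)%:R))
            <= d%:R * (n%:R ^+ 2 * a / 2 * Zs).
    rewrite -sum_lt_const; apply: ler_sum => j _; exact: EV_le.
  rewrite lerD2r lerD2l lerN2.
  apply: (le_trans (ler_wpM2l hc hV)); apply: eq_leR; rewrite /c; ring.
have -> : T = \sum_i \sum_X mu X * \sum_s M (inp X) s * Hh i X s.
  rewrite /T; under eq_bigr => X _ do (under eq_bigr => s _ do rewrite big_distrr /=; rewrite exchange_big /= big_distrr /=).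
  by rewrite exchange_big.
set C := expR 1 * _ + _.
rewrite (_ : n%:R * C = \sum_(i : 'I_n) C); last by rewrite sumr_const card_ord mulr_natl.
apply: ler_sum => i _.
apply: (@le_trans _ _ (\sum_X mu X * (expR 1 * Av i X (fun s => Hh i X s / 2 + Hh i X s ^+ 2 / (4 * t) + t / 4) + delta * (m%:R * Lr)))).
  apply: ler_sum => X _; apply: ler_wpM2l; [exact: ltW (mu_gt0 X) | exact: row_bound].
have AQ X : Av i X (fun s => Hh i X s / 2 + Hh i X s ^+ 2 / (4 * t) + t / 4) =
   1 / 2 * Av i X (Hh i X) + 1 / (4 * t) * Av i X (fun s => Hh i X s ^+ 2) + t / 4.
  rewrite -Av_aff; apply: Av_ext => s; field; by rewrite gt_eqF.
under eq_bigr => X _ do rewrite AQ.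
rewrite (E4lin (fun X => Av i X (Hh i X)) (fun X => Av i X (fun s => Hh i X s ^+ 2))).
rewrite zero_mean mulr0 add0r /C lerD2r; apply: ler_wpM2l; first exact: expR_ge0.
rewrite lerD2r; apply: ler_wpM2l; first by rewrite divr_ge0 // mulr_ge0 // ltW.
exact: var_bound.
Qed.
End Polya.

Lemma arith (R : realType) (N Mm D L s a e al dl Z den : R) :
  1 <= N -> 0 < s -> s ^+ 2 = Mm -> Mm <= 2 * L -> Mm <= 3 * D -> 0 < L ->
  0 < a -> al * a * 16 <= 1 -> 0 <= al -> 0 < den -> den <= N -> 0 < Z -> 0 < e ->
  N * e * 24 <= a * s -> N * dl * 96 <= a -> 0 <= dl ->
  a / den * (L * (D * (N / 2 * Z)) - al * (4 * Mm / N * (D * (N ^+ 2 * a / 2 * Z)))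
             - N * (1 / 48 * Mm ^+ 2) * Z)
  <= N * (e * (1 / (4 * (L * s / 2)) * (Z * (Mm * L ^+ 2 / 4)) + L * s / 2 / 4 * Z)
          + dl * (Mm * L) * Z) -> False.
Proof.
move=> hN hs hsM hML hMD hL ha hal hal0 hden hdN hZ he hNe hNd hdl.
have hN0 : 0 < N by lra.
have hM0 : 0 < Mm by rewrite -hsM exprn_gt0.
have hD0 : 0 < D by lra.
have eR : N * (e * (1 / (4 * (L * s / 2)) * (Z * (Mm * L ^+ 2 / 4)) + L * s / 2 / 4 * Z)
          + dl * (Mm * L) * Z) = Z * L * (N * e * s / 4 + N * dl * Mm).
  rewrite -hsM; field; apply/andP; split; by rewrite gt_eqF.
have eL : a / den * (L * (D * (N / 2 * Z)) - al * (4 * Mm / N * (D * (N ^+ 2 * a / 2 * Z)))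
             - N * (1 / 48 * Mm ^+ 2) * Z)
          = (a / den * N) * Z * (L * D / 2 - 2 * (al * a) * (Mm * D) - Mm * Mm / 48).
  field; apply/andP; split; by rewrite gt_eqF.
rewrite eR eL => H.
have h1 : 2 * (al * a) * (Mm * D) <= (Mm * D) / 8.
  have hMD0 : 0 <= Mm * D by rewrite mulr_ge0 // ltW.
  have : al * a <= 1 / 16 by lra.
  move=> h; have := ler_wpM2r hMD0 h; lra.
have h2 : Mm * Mm <= (2 * L) * (3 * D) by apply: ler_pM; lra.
have h2' : Mm * D <= 2 * L * D by apply: ler_wpM2r; lra.
have h3 : L * D / 8 <= L * D / 2 - 2 * (al * a) * (Mm * D) - Mm * Mm / 48 by lra.
have h4 : a <= a / den * N.
  rewrite mulrAC ler_pdivlMr //; apply: ler_wpM2l; lra.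
have hLD : 0 < L * D by rewrite mulr_gt0.
have h5 : a * Z * (L * D / 8) <= (a / den * N) * Z * (L * D / 2 - 2 * (al * a) * (Mm * D) - Mm * Mm / 48).
  apply: ler_pM; [by rewrite mulr_ge0 // ltW | by rewrite divr_ge0 // ltW | | exact: h3].
  by apply: ler_wpM2r => //; exact: ltW.
have h6 : N * e * s / 4 <= a * Mm / 96.
  rewrite -hsM; have := ler_wpM2r (ltW hs) hNe; rewrite expr2; lra.
have h7 : N * dl * Mm <= a * Mm / 96.
  have := ler_wpM2r (ltW hM0) hNd; lra.
have h8 : Z * L * (N * e * s / 4 + N * dl * Mm) <= Z * L * (a * Mm / 48).
  apply: ler_wpM2l; first by rewrite mulr_ge0 // ltW.
  lra.
have h9 := le_trans h5 (le_trans H h8).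
have h10 : (a * Z * L) * (D / 8) <= (a * Z * L) * (Mm / 48).
  have e1 : a * Z * L * (D / 8) = a * Z * (L * D / 8) by ring.
  have e2 : a * Z * L * (Mm / 48) = Z * L * (a * Mm / 48) by ring.
  by rewrite e1 e2.
have hp : 0 < a * Z * L by rewrite !mulr_gt0.
rewrite ler_pM2l // in h10.
lra.
Qed.
Lemma half_facts (m : nat) : (3 <= m)%N ->
  [/\ (m./2 <= m)%N, (m <= 2 * (m - m./2))%N, (m <= 3 * m./2)%N & (0 < m - m./2)%N].
Proof.
move=> h3; have h := odd_double_half m; have hb := leq_b1 (odd m).
rewrite -muln2 in h; split; lia.
Qed.

Theorem lemma3 (R : realType) (alpha : R) :
  0 < alpha ->
  exists c : R, 0 < c /\
  forall (mk nk : nat -> nat) (dk : nat -> R),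
    (forall k, (0 < nk k)%N) ->
    (forall k, 0 <= dk k) ->
    (* n = o(sqrt m) *)
    (forall e : R, 0 < e -> exists K, forall k, (K <= k)%N ->
        (nk k)%:R <= e * Num.sqrt ((mk k)%:R)) ->
    (* delta = o(1/n) *)
    (forall e : R, 0 < e -> exists K, forall k, (K <= k)%N ->
        dk k * (nk k)%:R <= e) ->
    exists K, forall k, (K <= k)%N ->
      forall M : mechanism R (nk k) (mk k),
        is_randomized_alg M ->
        is_DP 1 (dk k) M ->
        ~ is_approx alpha (c * ((mk k)%:R ^+ 2)) M.
Proof.
move=> hal.
pose a : R := 1 / (16 * (alpha + 1)).
have ha : 0 < a by rewrite /a divr_gt0 // mulr_gt0 // addr_gt0.
have ha16 : a <= 1 / 16.
  rewrite /a ler_pdivrMr ?mulr_gt0 ?addr_gt0 //; move: hal; lra.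
have hala : alpha * a * 16 <= 1.
  rewrite /a; have h1 : 0 < alpha + 1 by move: hal; lra.
  have -> : alpha * (1 / (16 * (alpha + 1))) * 16 = alpha / (alpha + 1).
    by field; rewrite gt_eqF.
  by rewrite ler_pdivrMr // mul1r; move: hal; lra.
exists (1 / 48); split; first by rewrite divr_gt0.
move=> mk nk dk hn0 hd0 hsq hdel.
have he : 0 < expR 1 :> R by exact: expR_gt0.
have he1 : 1 <= expR 1 :> R by have := @expR_ge1Dx R 1; lra.
pose eps := a / (24 * expR 1).
have heps : 0 < eps by rewrite /eps divr_gt0 // mulr_gt0.
have [K1 HK1] := hsq eps heps.
have ha96 : 0 < a / 96 by rewrite divr_gt0.
have [K2 HK2] := hdel (a / 96) ha96.
exists (maxn K1 K2) => k hk M hM hDP happ.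
have hk1 : (K1 <= k)%N by apply: leq_trans hk; exact: leq_maxl.
have hk2 : (K2 <= k)%N by apply: leq_trans hk; exact: leq_maxr.
have hN := HK1 k hk1; have hD := HK2 k hk2.
have hnk := hn0 k.
have hN1 : 1 <= (nk k)%:R :> R by rewrite ler1n.
set s := Num.sqrt (mk k)%:R in hN.
have hs0 : 0 <= s by exact: sqrtr_ge0.
have hs2 : s ^+ 2 = (mk k)%:R by rewrite /s sqr_sqrtr // ler0n.
have heps2 : eps <= 1 / 384.
  rewrite /eps ler_pdivrMr ?mulr_gt0 //.
  have -> : 1 / 384 * (24 * expR 1) = expR 1 / 16 :> R by field.
  apply: (le_trans ha16); apply: ler_wpM2r; [by rewrite invr_ge0 | exact: he1].
have hs384 : 384 <= s.
  have : 1 <= eps * s by apply: le_trans hN1 hN.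
  move=> h; move: heps2 hs0; nra.
have hm3 : (3 <= mk k)%N.
  rewrite -(ler_nat R) -hs2; have : (3 : R) <= s by move: hs384; lra.
  move=> h3; have := ler_pM (ler0n _ 3) (ler0n _ 3) h3 h3; rewrite expr2.
  have : (3 : R) * 3 >= 3 by lra.
  move=> h h'; apply: le_trans h h' => //.
have [hdm h2L h3D hL0] := half_facts (mk k) hm3.
have hs : 0 < s by move: hs384; lra.
have hLr : 0 < Lr R (mk k) (mk k)./2 by rewrite /Lr ltr0n.
have ht : 0 < Lr R (mk k) (mk k)./2 * s / 2 by rewrite divr_gt0 // mulr_gt0.
have H := @main_ineq R (nk k) (mk k) a ha hnk ((mk k)./2) M hdm hM alpha _ (dk k) _ (ltW hal) ht hDP happ.
apply: (@arith R (nk k)%:R (mk k)%:R ((mk k)./2)%:R (Lr R (mk k) (mk k)./2) s a (expR 1) alpha (dk k) (Zs R (nk k) (mk k) a) (den R (nk k) a)) H.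
- exact: hN1.
- exact: hs.
- exact: hs2.
- by rewrite /Lr -natrM ler_nat.
- by rewrite -natrM ler_nat.
- exact: hLr.
- exact: ha.
- exact: hala.
- exact: ltW.
- exact: den_gt0.
- rewrite /den; move: ha16; lra.
- exact: Zs_gt0.
- exact: he.
- move: hN; rewrite /eps => hN.
  have : (nk k)%:R * (24 * expR 1) <= a / (24 * expR 1) * s * (24 * expR 1).
    by apply: ler_wpM2r => //; rewrite mulr_ge0 // ltW.
  have -> : a / (24 * expR 1) * s * (24 * expR 1) = a * s.
    by field; rewrite gt_eqF // mulr_gt0.
  move=> h; rewrite -mulrA [expR 1 * 24]mulrC.
  exact: h.
- by move: hD; rewrite mulrC => hD; rewrite -mulrA mulrC; move: hD; lra.
- exact: hd0.
Qed.
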